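(* (i) For any positive integers $a,r$ there exists an $(ra^2,2,ra,r)$-PSEDF in $\mathbb{Z}_{ra^2}$. (ii) For any positive integers $\lambda,a$ there exists a non-disjoint $(\lambda a^2,2,\lambda a,\lambda)$-SEDF in $\mathbb{Z}_{\lambda a^2}$. (iii) For any positive integer $k$, the sets $\{0,1,\dots,k-1\}$ and $\{0,k,2k,\dots,(k-1)k\}$ form a non-disjoint $(k^2,2,k,1)$-SEDF in $\mathbb{Z}_{k^2}$.
   Context: Groups are written additively. For subsets $A,B$ of a group $G$, $\Delta(A,B)$ is the multiset $\{a-b:a\in A,b\in B\}$ and $\lambda G$ is the multiset with each element of $G$ exactly $\lambda$ times. For $G$ of order $v$ and $m>1$, a family of $k$-subsets $\{A_1,\dots,A_m\}$ of $G$ is a $(v,m,k,\lambda)$-PSEDF if $\Delta(A_i,A_j)=\lambda G$ for every $i\neq j$; it is a non-disjoint $(v,m,k,\lambda)$-SEDF if for each $i$ the multiset union $\bigcup_{j\neq i}\Delta(A_i,A_j)$ equals $\lambda G$. The sets need not be disjoint. *)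

(* Defs.v *)
From HB Require Import structures.
From mathcomp Require Import all_boot all_order all_algebra.
Set Implicit Arguments. Unset Strict Implicit. Unset Printing Implicit Defensive.
Import GRing.Theory.
Local Open Scope ring_scope.

(* The cyclic group Z_v for v >= 1: ordinals 'I_v with arithmetic mod v.
   (For v >= 1, v.-1.+1 = v; we avoid 'Z_v, which is wrong for v = 1.) *)
Notation Zmod v := 'I_(v.-1).+1.

Definition diff_mult (G : finZmodType) (A B : {set G}) (g : G) : nat :=
  #|[set ab : G * G | [&& ab.1 \in A, ab.2 \in B & ab.1 - ab.2 == g]]|.

Definition PSEDF (G : finZmodType) (v m k lam : nat) (A : 'I_m -> {set G}) : Prop :=
  [/\ #|G| = v, (1 < m)%N, (forall i, #|A i| = k) &
      forall i j : 'I_m, i != j -> forall g : G, diff_mult (A i) (A j) g = lam].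

(* (possibly non-disjoint) (v,m,k,lambda)-SEDF: the multiset union over j <> i of
   Delta(A_i,A_j) equals lambda G, for each i. Disjointness is not required. *)
Definition SEDF (G : finZmodType) (v m k lam : nat) (A : 'I_m -> {set G}) : Prop :=
  [/\ #|G| = v, (1 < m)%N, (forall i, #|A i| = k) &
      forall (i : 'I_m) (g : G), (\sum_(j < m | j != i) diff_mult (A i) (A j) g)%N = lam].
Arguments PSEDF {G} v m k lam A.
Arguments SEDF {G} v m k lam A.

(* Main.v *)
Require Import Defs.
From HB Require Import structures.
From mathcomp Require Import all_boot all_order all_algebra.
From mathcomp Require Import zify.
Set Implicit Arguments. Unset Strict Implicit. Unset Printing Implicit Defensive.
Import GRing.Theory.

Lemma proj1_card (G : finZmodType) (X Y : {set G}) g :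
  diff_mult X Y g = #|[set x in X | (x - g)%R \in Y]|.
Proof.
rewrite /diff_mult -(card_in_imset (f := fst)).
  apply: eq_card => x; rewrite !inE; apply/imsetP/andP.
    by case=> [[y z]]; rewrite inE /= => /and3P[hy hz /eqP <-] ->; rewrite opprB addrC subrK.
  case=> hx hy; exists (x, (x - g)%R) => //; rewrite inE /= hx hy opprB addrC subrK eqxx.
    done.
move=> [x1 y1] [x2 y2]; rewrite !inE /= => /and3P[_ _ /eqP h1] /and3P[_ _ /eqP h2] e.
by rewrite e in h1 *; congr pair; apply: oppr_inj; apply: (addrI x2); rewrite h1 h2.
Qed.

Lemma proj2_card (G : finZmodType) (X Y : {set G}) g :
  diff_mult X Y g = #|[set y in Y | (y + g)%R \in X]|.
Proof.
rewrite /diff_mult -(card_in_imset (f := snd)).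
  apply: eq_card => y; rewrite !inE; apply/imsetP/andP.
    by case=> [[x z]]; rewrite inE /= => /and3P[hy hz /eqP <-] ->; rewrite addrC subrK.
  case=> hy hx; exists ((y + g)%R, y) => //; rewrite inE /= hx hy addrC addKr eqxx.
  done.
move=> [x1 y1] [x2 y2]; rewrite !inE /= => /and3P[_ _ /eqP h1] /and3P[_ _ /eqP h2] e.
by rewrite e in h1 *; congr pair; rewrite -(subrK y2 x1) -(subrK y2 x2) h1 h2.
Qed.

Lemma diff_swap (G : finZmodType) (X Y : {set G}) g :
  diff_mult Y X g = diff_mult X Y (- g)%R.
Proof. by rewrite proj2_card proj1_card; apply: eq_card => x; rewrite !inE opprK. Qed.

Lemma one_block a c : 0 < a -> \sum_(x < a) ((x + c) %% a == 0 : nat) = 1.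
Proof.
move=> ha.
have key : forall x : 'I_a, ((x + c) %% a == 0) = (x == (a - c %% a) %% a :> nat).
  move=> x; rewrite -modnDmr.
  have hd : c %% a < a by rewrite ltn_mod.
  have hx := ltn_ord x; move: (nat_of_ord x) hx => y hx.
  move: (c %% a) hd => d hd.
  case: (posnP d) => [->|dpos].
    by rewrite addn0 subn0 modnn modn_small.
  rewrite (@modn_small (a - d)); last by lia.
  case: (ltnP (y + d) a) => h.
    rewrite modn_small //; apply/idP/idP => /eqP e; lia.
  have -> : y + d = (y + d - a) + a by rewrite subnK.
  rewrite modnDr modn_small; last by lia.
  apply/idP/idP => /eqP e; lia.
rewrite (bigD1 (Ordinal (@ltn_pmod (a - c %% a) a ha))) //=.
have := key (Ordinal (@ltn_pmod (a - c %% a) a ha)); rewrite /= eqxx => ->.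
rewrite big1 // => i hi; rewrite key; case: eqP => // e.
by move: hi; rewrite -val_eqE /= e eqxx.
Qed.

Lemma count_block a q c : 0 < a -> \sum_(x < q * a) ((x + c) %% a == 0 : nat) = q.
Proof.
move=> ha; elim: q => [|q IH]; first by rewrite mul0n big_ord0.
rewrite mulSn addnC -(big_mkord xpredT (fun x => ((x + c) %% a == 0 : nat))).
rewrite (big_cat_nat (n := q * a)) //=; last by rewrite leq_addr.
rewrite big_mkord IH -{1}(add0n (q * a)) big_addn addKn -addn1; congr (_ + _).
rewrite big_mkord -(one_block (c + q * a) ha); apply: eq_bigr => i _.
by rewrite (addnC c) addnA.
Qed.

Definition SA n' m : {set 'I_n'.+1} := [set inZp i | i : 'I_m].
Definition SB n' m a : {set 'I_n'.+1} := [set inZp (i * a) | i : 'I_m].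

Section Core.
Variables (n' m a : nat).
Hypotheses (hN : n'.+1 = m * a) (ha : 0 < a).

Lemma mleN : m <= n'.+1.
Proof. by rewrite hN leq_pmulr. Qed.

Lemma memA x : (x \in SA n' m) = (val x < m).
Proof.
apply/imsetP/idP => [[i _ ->] /=|hx].
  by rewrite modn_small // (leq_trans (ltn_ord i) mleN).
exists (Ordinal hx) => //; apply: val_inj => /=; rewrite modn_small //.
Qed.

Lemma memB x : (x \in SB n' m a) = (a %| val x).
Proof.
apply/imsetP/idP => [[i _ ->] /=|hx].
  by rewrite modn_small ?dvdn_mull // hN ltn_mul2r ha ltn_ord.
have hq : val x %/ a < m by rewrite ltn_divLR // -hN; apply: ltn_ord.
exists (Ordinal hq) => //; apply: val_inj => /=; rewrite divnK // modn_small //.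
Qed.

Lemma cardA : #|SA n' m| = m.
Proof.
rewrite card_imset ?card_ord // => i j /(congr1 val) /=.
rewrite !modn_small ?(leq_trans (ltn_ord _) mleN) //; exact: val_inj.
Qed.

Lemma cardB : #|SB n' m a| = m.
Proof.
rewrite card_imset ?card_ord // => i j /(congr1 val) /=.
rewrite !modn_small ?hN ?ltn_mul2r ?ha ?ltn_ord // => /eqP.
by rewrite eqn_pmul2r // => /eqP; apply: val_inj.
Qed.


Lemma val_sub (x g : 'I_n'.+1) :
  val (x - g)%R = (x + (n'.+1 - g) %% n'.+1) %% n'.+1.
Proof. by []. Qed.

Lemma core q (hm : m = q * a) g : diff_mult (SA n' m) (SB n' m a) g = q.
Proof.
have haN : a %| n'.+1 by rewrite hN dvdn_mull.
rewrite proj1_card.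
have -> : #|[set x in SA n' m | (x - g)%R \in SB n' m a]| =
          #|[set x : 'I_n'.+1 | (x < m) && ((x + (n'.+1 - g)) %% a == 0)]|.
  apply: eq_card => x; rewrite !inE memA memB val_sub /dvdn modn_dvdm //.
  by rewrite -modnDmr modn_dvdm // modnDmr.
rewrite -sum1_card big_mkcond /=.
under eq_bigr => i _ do rewrite inE.
rewrite -(big_mkord xpredT (fun x => if (x < m) && ((x + (n'.+1 - g)) %% a == 0) then 1 else 0)).
rewrite (big_cat_nat (n := m)) //= ?mleN //.
rewrite [X in _ + X = _]big1_seq ?addn0; last first.
  by move=> i /andP[_]; rewrite mem_index_iota => /andP[]; rewrite leqNgt => /negbTE ->.
rewrite -(@count_block a q (n'.+1 - g) ha) -hm big_mkord; apply: eq_bigr => i _.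
by rewrite ltn_ord /=; case: (_ == 0).
Qed.

Lemma core2 q (hm : m = q * a) g : diff_mult (SB n' m a) (SA n' m) g = q.
Proof. by rewrite diff_swap (core hm). Qed.

End Core.

Lemma pairs2 (T : Type) (A : 'I_2 -> T) (P : T -> T -> Prop) :
  P (A ord0) (A ord_max) -> P (A ord_max) (A ord0) ->
  forall i j : 'I_2, i != j -> P (A i) (A j).
Proof.
move=> h1 h2 i j hne.
have [e0|e1] : i = ord0 \/ i = ord_max.
  case: i hne => [[|[|i]] hi] _; [left|right|by []]; exact: val_inj.
- have -> : j = ord_max.
    subst i; case: j hne => [[|[|j]] hj] hne; [by [] | exact: val_inj | by []].
  by rewrite e0.
- have -> : j = ord0.
    subst i; case: j hne => [[|[|j]] hj] hne; [exact: val_inj | by [] | by []].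
  by rewrite e1.
Qed.

Lemma psedf_gen (r a : nat) : (0 < a)%N -> (0 < r)%N ->
  let n' := (r * a ^ 2).-1 in
  PSEDF (r * a ^ 2) 2 (r * a) r
    (fun j : 'I_2 => if val j == 0%N then SA n' (r * a) else SB n' (r * a) a).
Proof.
move=> ha hr n'.
have hpos : (0 < r * a ^ 2)%N by rewrite muln_gt0 hr expn_gt0 ha.
have hN : n'.+1 = (r * a * a)%N by rewrite /n' prednK // -mulnA mulnn.
split => //.
- by rewrite card_ord /n' prednK.
- by move=> i; case: (val i == 0%N); [apply: (cardA (a := a)) | apply: cardB].
- move=> i j; apply: (@pairs2 _ (fun j : 'I_2 => if val j == 0%N then SA n' (r * a) else SB n' (r * a) a) (fun X Y => forall g, diff_mult X Y g = r)) => g /=.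
    exact: core.
  exact: core2.
Qed.

Lemma psedf_sedf (G : finZmodType) v k lam (A : 'I_2 -> {set G}) :
  PSEDF v 2 k lam A -> SEDF v 2 k lam A.
Proof.
case=> h1 h2 h3 h4; split => // i g.
rewrite big_mkcond !big_ord_recr big_ord0 /=.
case: i => [[|[|i]] hi] //=.
- by rewrite h4 //.
- by rewrite add0n addn0 h4.
Qed.

Local Open Scope ring_scope.

Theorem corollary3p2 :
  (* (i) *)
  (forall a r : nat, (0 < a)%N -> (0 < r)%N ->
     exists A : 'I_2 -> {set Zmod (r * a ^ 2)},
       PSEDF (r * a ^ 2) 2 (r * a) r A) /\
  (* (ii) *)
  (forall lam a : nat, (0 < lam)%N -> (0 < a)%N ->
     exists A : 'I_2 -> {set Zmod (lam * a ^ 2)},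
       SEDF (lam * a ^ 2) 2 (lam * a) lam A) /\
  (* (iii) *)
  (forall k : nat, (0 < k)%N ->
     SEDF (k ^ 2) 2 k 1
       (fun j : 'I_2 =>
          if val j == 0%N
          then [set (inZp i : Zmod (k ^ 2)) | i : 'I_k]
          else [set (inZp (i * k) : Zmod (k ^ 2)) | i : 'I_k])).
Proof.
split; [|split].
- move=> a r ha hr; eexists; exact: (psedf_gen ha hr).
- move=> lam a hl ha; eexists; apply: psedf_sedf; exact: (psedf_gen ha hl).
- move=> k hk; apply: psedf_sedf.
  have := psedf_gen hk (ltn0Sn 0); rewrite !mul1n; exact.
Qed.
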